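(* Let $l<u$ be real, $D=[l,u]$, $b>0$, and let $\Delta Q$ be a real number with $0<\Delta Q\le u-l$. For $p\in D$ let $C_p=\int_l^u\frac{1}{2b}e^{-\frac{|x-p|}{b}}\,dx$. Then $$\max_{\substack{q,q'\in D\\ |q'-q|\le \Delta Q}} \frac{C_{q'}}{C_q}\,e^{\frac{|q'-q|}{b}} = \frac{C_{l+\Delta Q}}{C_l}\,e^{\frac{\Delta Q}{b}}.$$
   Context: Equivalently $C_p = 1-\frac{1}{2}\left(e^{-\frac{p-l}{b}}+e^{-\frac{u-p}{b}}\right)$ for $p\in D$. *)

(* Defs.v *)
From Stdlib Require Import Reals Lra.
Open Scope R_scope.

Definition lap_density (b p : R) (x : R) : R :=
  / (2 * b) * exp (- (Rabs (x - p)) / b).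

Lemma lap_density_continuous (b p : R) : continuity (lap_density b p).
Proof.
  intro x. unfold lap_density.
  apply continuity_pt_mult.
  - apply continuity_pt_const. intros ? ?; reflexivity.
  - apply (continuity_pt_comp (fun y => - Rabs (y - p) / b) exp).
    + unfold Rdiv. apply continuity_pt_mult.
      * apply continuity_pt_opp.
        apply (continuity_pt_comp (fun y => y - p) Rabs).
        -- apply continuity_pt_minus; [apply derivable_continuous_pt, derivable_pt_id
                                     | apply continuity_pt_const; intros ? ?; reflexivity].
        -- apply Rcontinuity_abs.
      * apply continuity_pt_const. intros ? ?; reflexivity.
    + apply derivable_continuous_pt, derivable_pt_exp.
Qed.

Lemma lap_density_integrable (b p l u : R) : Riemann_integrable (lap_density b p) l u.
Proof.
  destruct (Rle_dec l u) as [H|H].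
  - apply continuity_implies_RiemannInt; [exact H|].
    intros; apply lap_density_continuous.
  - apply RiemannInt_P1. apply continuity_implies_RiemannInt; [lra|].
    intros; apply lap_density_continuous.
Qed.

Definition Cp (l u b p : R) : R := RiemannInt (lap_density_integrable b p l u).

Definition ratio_obj (l u b q q' : R) : R :=
  Cp l u b q' / Cp l u b q * exp (Rabs (q' - q) / b).

(* Main.v *)
Require Import Defs.
From Stdlib Require Import Reals Lra.
From Coquelicot Require Import Coquelicot.
Open Scope R_scope.

Lemma lap_ex (b p a c : R) : ex_RInt (lap_density b p) a c.
Proof.
  apply (@ex_RInt_continuous R_CompleteNormedModule). intros z _.
  apply continuity_pt_filterlim. apply lap_density_continuous.
Qed.

Lemma piece1 (b p l : R) : 0 < b -> l <= p ->
  RInt (lap_density b p) l p = / 2 - exp (-(p-l)/b) / 2.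
Proof.
  intros hb hlp.
  rewrite (RInt_ext _ (fun x => / (2*b) * exp ((x-p)/b))).
  2:{ intros x hx. rewrite Rmin_left in hx by lra. rewrite Rmax_right in hx by lra.
      unfold lap_density. rewrite Rabs_left by lra. f_equal. f_equal. field. lra. }
  apply is_RInt_unique.
  replace (/2 - exp (-(p-l)/b)/2) with
    (minus ((fun x => /2 * exp ((x-p)/b)) p) ((fun x => /2 * exp ((x-p)/b)) l)).
  2:{ unfold minus, plus, opp; simpl. replace ((p-p)/b) with 0 by (field; lra).
      rewrite exp_0. replace ((l-p)/b) with (-(p-l)/b) by (field; lra). lra. }
  apply (@is_RInt_derive R_CompleteNormedModule (fun x => /2 * exp ((x-p)/b))).
  - intros x _. auto_derive; auto. rewrite Rinv_mult; unfold Rminus, Rdiv; ring.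
  - intros y _. apply continuity_pt_filterlim.
    apply continuity_pt_mult. apply continuity_pt_const; intros ? ?; reflexivity.
    apply (continuity_pt_comp (fun y => (y - p)/b) exp).
    + unfold Rdiv. apply continuity_pt_mult. apply continuity_pt_minus.
      apply derivable_continuous_pt, derivable_pt_id.
      apply continuity_pt_const; intros ? ?; reflexivity.
      apply continuity_pt_const; intros ? ?; reflexivity.
    + apply derivable_continuous_pt, derivable_pt_exp.
Qed.

Lemma piece2 (b p u : R) : 0 < b -> p <= u ->
  RInt (lap_density b p) p u = / 2 - exp (-(u-p)/b) / 2.
Proof.
  intros hb hlp.
  rewrite (RInt_ext _ (fun x => / (2*b) * exp (-(x-p)/b))).
  2:{ intros x hx. rewrite Rmin_left in hx by lra. rewrite Rmax_right in hx by lra.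
      unfold lap_density. rewrite Rabs_right by lra. reflexivity. }
  apply is_RInt_unique.
  replace (/2 - exp (-(u-p)/b)/2) with
    (minus ((fun x => -/2 * exp (-(x-p)/b)) u) ((fun x => -/2 * exp (-(x-p)/b)) p)).
  2:{ unfold minus, plus, opp; simpl. replace (-(p-p)/b) with 0 by (field; lra).
      rewrite exp_0. lra. }
  apply (@is_RInt_derive R_CompleteNormedModule (fun x => -/2 * exp (-(x-p)/b))).
  - intros x _. auto_derive; auto. rewrite Rinv_mult; unfold Rminus, Rdiv; ring.
  - intros y _. apply continuity_pt_filterlim.
    apply continuity_pt_mult. apply continuity_pt_const; intros ? ?; reflexivity.
    apply (continuity_pt_comp (fun y => -(y - p)/b) exp).
    + unfold Rdiv. apply continuity_pt_mult. apply continuity_pt_opp. apply continuity_pt_minus.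
      apply derivable_continuous_pt, derivable_pt_id.
      apply continuity_pt_const; intros ? ?; reflexivity.
      apply continuity_pt_const; intros ? ?; reflexivity.
    + apply derivable_continuous_pt, derivable_pt_exp.
Qed.

Lemma Cp_closed l u b p : 0 < b -> l <= p <= u ->
  Cp l u b p = 1 - (exp (-(p-l)/b) + exp (-(u-p)/b)) / 2.
Proof.
  intros hb hp. unfold Cp. rewrite <- RInt_Reals.
  rewrite <- (RInt_Chasles _ l p u) by apply lap_ex.
  rewrite piece1, piece2 by lra. unfold plus; simpl. lra.
Qed.

Lemma exp_mono x y : x <= y -> exp x <= exp y.
Proof. intros [h|h]; [left; apply exp_increasing; exact h| subst; lra]. Qed.

Definition hh (E t : R) := t - /2 - E * t * t / 2.

Lemma alg (E a c D : R) : 0 < E < 1 -> 1 <= a -> 1 <= c <= D ->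
  E * a * c <= 1 -> E * D <= 1 ->
  0 < hh E a /\ hh E (a*c) / hh E a <= hh E D / hh E 1.
Proof.
  intros hE ha hc hac hD.
  assert (Ea : E * a <= 1) by nra.
  assert (Ec : E * c <= 1) by nra.
  assert (h1 : 0 < hh E 1) by (unfold hh; lra).
  assert (ha1 : hh E a - hh E 1 = (a-1)*(1 - E*(a+1)/2)) by (unfold hh; field).
  assert (hapos : 0 < hh E a).
  { assert (0 <= (a-1)*(1 - E*(a+1)/2)) by (apply Rmult_le_pos; lra). lra. }
  split; [exact hapos|].
  assert (key : hh E a * hh E c - hh E (a*c) * hh E 1 =
     (a-1)*(c-1)/4 * (2 - E*(c+1) + E*a*(c-1))) by (unfold hh; field).
  assert (k1 : 0 <= (a-1)*(c-1)/4 * (2 - E*(c+1) + E*a*(c-1))).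
  { apply Rmult_le_pos. assert (0 <= (a-1)*(c-1)) by (apply Rmult_le_pos; lra). lra.
    assert (0 <= E*a*(c-1)) by (apply Rmult_le_pos; nra). nra. }
  assert (k2 : hh E D - hh E c = (D-c)*(1 - E*(D+c)/2)) by (unfold hh; field).
  assert (k3 : 0 <= (D-c)*(1 - E*(D+c)/2)) by (apply Rmult_le_pos; nra).
  apply (Rmult_le_reg_r (hh E a * hh E 1)). nra.
  replace (hh E (a * c) / hh E a * (hh E a * hh E 1)) with (hh E (a*c) * hh E 1) by (field; lra).
  replace (hh E D / hh E 1 * (hh E a * hh E 1)) with (hh E D * hh E a) by (field; lra).
  assert (hh E a * hh E c <= hh E a * hh E D) by (apply Rmult_le_compat_l; lra).
  nra.
Qed.

Lemma exp_ge1 x b : 0 < b -> 0 <= x -> 1 <= exp (x/b).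
Proof. intros hb hx. rewrite <- exp_0. apply exp_mono. unfold Rdiv.
  apply Rmult_le_pos; [lra| left; apply Rinv_0_lt_compat; lra]. Qed.

Lemma exp_lt1 x b : 0 < b -> 0 < x -> exp (-x/b) < 1.
Proof. intros hb hx. rewrite <- exp_0. apply exp_increasing. unfold Rdiv.
  assert (0 < x * / b) by (apply Rmult_lt_0_compat; [lra| apply Rinv_0_lt_compat; lra]). nra. Qed.

Lemma exp_le1 x b : 0 < b -> 0 <= x -> exp (-x/b) <= 1.
Proof. intros hb hx. rewrite <- exp_0. apply exp_mono. unfold Rdiv.
  assert (0 <= x * / b) by (apply Rmult_le_pos; [lra| left; apply Rinv_0_lt_compat; lra]). nra. Qed.

Lemma ratio_h l u b q q' : 0 < b -> l < u -> l <= q -> q <= q' -> q' <= u ->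
  ratio_obj l u b q q' =
  hh (exp (-(u-l)/b)) (exp ((q-l)/b) * exp ((q'-q)/b)) / hh (exp (-(u-l)/b)) (exp ((q-l)/b)).
Proof.
  intros hb hlu h1 h2 h3.
  unfold ratio_obj. rewrite !Cp_closed by lra.
  rewrite Rabs_right by lra.
  assert (hE : 0 < exp (-(u-l)/b) < 1) by (split; [apply exp_pos| apply exp_lt1; lra]).
  assert (ha : 1 <= exp ((q-l)/b)) by (apply exp_ge1; lra).
  assert (hc : 1 <= exp ((q'-q)/b)) by (apply exp_ge1; lra).
  assert (hac : exp (-(u-l)/b) * exp ((q-l)/b) * exp ((q'-q)/b) <= 1).
  { rewrite <- !exp_plus. replace (-(u-l)/b + (q-l)/b + (q'-q)/b) with (-(u-q')/b) by (field; lra).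
    apply exp_le1; lra. }
  assert (hEc : exp (-(u-l)/b) * exp ((q'-q)/b) <= 1).
  { pose proof (exp_pos (-(u-l)/b)). pose proof (exp_pos ((q'-q)/b)). nra. }
  destruct (alg (exp (-(u-l)/b)) (exp ((q-l)/b)) (exp ((q'-q)/b)) (exp ((q'-q)/b)))
    as [hpos _]; try lra.
  replace (-(q-l)/b) with (-((q-l)/b)) by (field; lra).
  replace (-(u-q)/b) with (-(u-l)/b + (q-l)/b) by (field; lra).
  replace (-(q'-l)/b) with (-((q-l)/b + (q'-q)/b)) by (field; lra).
  replace (-(u-q')/b) with (-(u-l)/b + ((q-l)/b + (q'-q)/b)) by (field; lra).
  rewrite !exp_Ropp, !exp_plus.
  revert hE ha hc hac hpos.
  set (E := exp (-(u-l)/b)). set (a := exp ((q-l)/b)). set (c := exp ((q'-q)/b)).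
  intros hE ha hc hac hpos.
  assert (e1 : 1 - (/ a + E * a) / 2 = hh E a / a) by (unfold hh; field; lra).
  assert (e2 : 1 - (/ (a*c) + E * (a*c)) / 2 = hh E (a*c) / (a*c)) by (unfold hh; field; lra).
  rewrite e1, e2. field. split; [lra|]. split; lra.
Qed.

Lemma half l u b dQ q q' : l < u -> 0 < b -> 0 < dQ -> dQ <= u - l ->
  l <= q -> q <= q' -> q' <= u -> q' - q <= dQ ->
  ratio_obj l u b q q' <= Cp l u b (l + dQ) / Cp l u b l * exp (dQ / b).
Proof.
  intros hlu hb hd0 hd1 h1 h2 h3 h4.
  assert (eR : Cp l u b (l + dQ) / Cp l u b l * exp (dQ / b) = ratio_obj l u b l (l+dQ)).
  { unfold ratio_obj. replace (l + dQ - l) with dQ by ring. rewrite Rabs_right by lra. reflexivity. }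
  rewrite eR, (ratio_h l u b q q'), (ratio_h l u b l (l+dQ)) by lra.
  replace ((l-l)/b) with 0 by (field; lra). replace (l+dQ-l) with dQ by ring.
  rewrite exp_0, Rmult_1_l.
  assert (hE : 0 < exp (-(u-l)/b) < 1) by (split; [apply exp_pos| apply exp_lt1; lra]).
  assert (ha : 1 <= exp ((q-l)/b)) by (apply exp_ge1; lra).
  assert (hc : 1 <= exp ((q'-q)/b)) by (apply exp_ge1; lra).
  assert (hcD : exp ((q'-q)/b) <= exp (dQ/b)).
  { apply exp_mono. unfold Rdiv. apply Rmult_le_compat_r; [left; apply Rinv_0_lt_compat|]; lra. }
  assert (hac : exp (-(u-l)/b) * exp ((q-l)/b) * exp ((q'-q)/b) <= 1).
  { rewrite <- !exp_plus. replace (-(u-l)/b + (q-l)/b + (q'-q)/b) with (-(u-q')/b) by (field; lra).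
    apply exp_le1; lra. }
  assert (hD : exp (-(u-l)/b) * exp (dQ/b) <= 1).
  { rewrite <- !exp_plus. replace (-(u-l)/b + dQ/b) with (-(u-l-dQ)/b) by (field; lra).
    apply exp_le1; lra. }
  apply alg; lra.
Qed.

Lemma Cp_sym l u b p : 0 < b -> l <= p <= u -> Cp l u b (l + u - p) = Cp l u b p.
Proof.
  intros hb hp. rewrite !Cp_closed by lra.
  replace (-(l+u-p-l)/b) with (-(u-p)/b) by (field; lra).
  assert (e : - (u - (l + u - p)) / b = -(p-l)/b) by (field; lra).
  rewrite e. lra.
Qed.

Theorem lemma3p2 (l u b dQ : R) (hlu : l < u) (hb : 0 < b)
    (hdQ0 : 0 < dQ) (hdQ1 : dQ <= u - l) :
  (exists q q', l <= q <= u /\ l <= q' <= u /\ Rabs (q' - q) <= dQ /\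
     ratio_obj l u b q q' = Cp l u b (l + dQ) / Cp l u b l * exp (dQ / b)) /\
  (forall q q', l <= q <= u -> l <= q' <= u -> Rabs (q' - q) <= dQ ->
     ratio_obj l u b q q' <= Cp l u b (l + dQ) / Cp l u b l * exp (dQ / b)).
Proof.
  split.
  - exists l, (l + dQ). replace (l + dQ - l) with dQ by ring.
    rewrite Rabs_right by lra. split; [lra|]. split; [lra|]. split; [lra|].
    unfold ratio_obj. replace (l + dQ - l) with dQ by ring. rewrite Rabs_right by lra. reflexivity.
  - intros q q' hq hq' hd.
    destruct (Rle_or_lt q q') as [hle|hlt].
    + rewrite Rabs_right in hd by lra. apply half; lra.
    + rewrite Rabs_left in hd by lra.
      assert (e : ratio_obj l u b q q' = ratio_obj l u b (l+u-q) (l+u-q')).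
      { unfold ratio_obj. rewrite !Cp_sym by lra.
        replace (l+u-q' - (l+u-q)) with (-(q'-q)) by ring. rewrite Rabs_Ropp. reflexivity. }
      rewrite e. apply half; lra.
Qed.
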